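(* Let $\{\mathcal{N}(\mathbf{t}),\ \mathbf{t}\in\mathbb{R}^d_+\}$ be a multiparameter Poisson process with transition parameter $\boldsymbol{\Lambda}=(\lambda_1,\dots,\lambda_d)$, $\lambda_i>0$. Then for $\mathbf{0}\prec\mathbf{r}\preceq\mathbf{s}\preceq\mathbf{t}$ and $m\ge1$, $$\mathbb{E}\{\mathcal{N}(\mathbf{r})\mathcal{N}(\mathbf{s})\mid\mathcal{N}(\mathbf{t})=m\}=\frac{m\,\boldsymbol{\Lambda}\cdot\mathbf{r}}{\boldsymbol{\Lambda}\cdot\mathbf{t}}+m(m-1)\frac{(\boldsymbol{\Lambda}\cdot\mathbf{r})(\boldsymbol{\Lambda}\cdot\mathbf{s})}{(\boldsymbol{\Lambda}\cdot\mathbf{t})^2}.$$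
   Context: On $\mathbb{R}^d_+$ use the componentwise partial order $\preceq$, with $\prec$ the strict relation; $\boldsymbol{\Lambda}\cdot\mathbf{t}=\sum_i\lambda_it_i$. A multiparameter Poisson process with transition parameter $\boldsymbol{\Lambda}$ is a nonnegative-integer-valued random field on $\mathbb{R}^d_+$ with $\mathcal{N}(\mathbf{0})=0$, nondecreasing in $\preceq$, with independent increments along chains $\mathbf{0}=\mathbf{t}^{(0)}\prec\dots\prec\mathbf{t}^{(m)}$, stationary increments ($\mathcal{N}(\mathbf{t})-\mathcal{N}(\mathbf{s})\overset{d}{=}\mathcal{N}(\mathbf{t}-\mathbf{s})$ for $\mathbf{s}\preceq\mathbf{t}$), and $\mathcal{N}(\mathbf{t})\sim$ Poisson$(\boldsymbol{\Lambda}\cdot\mathbf{t})$. *)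

(* Defs.v *)
From HB Require Import structures.
From mathcomp Require Import all_boot all_order all_algebra.
From mathcomp Require Import all_classical all_reals all_analysis.
Set Implicit Arguments. Unset Strict Implicit. Unset Printing Implicit Defensive.
Import Order.TTheory GRing.Theory Num.Theory.
Local Open Scope classical_set_scope.
Local Open Scope ring_scope.

Definition pt (R : realType) (d : nat) := 'I_d -> R.

Definition pzero (R : realType) (d : nat) : pt R d := fun _ => 0.
Definition psub (R : realType) (d : nat) (t s : pt R d) : pt R d :=
  fun i => t i - s i.
Definition nonneg_pt (R : realType) (d : nat) (t : pt R d) : Prop :=
  forall i, 0 <= t i.
Definition ple (R : realType) (d : nat) (s t : pt R d) : Prop :=
  forall i, s i <= t i.
Definition plt (R : realType) (d : nat) (s t : pt R d) : Prop :=
  ple s t /\ s <> t.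
Definition pdot (R : realType) (d : nat) (lam t : pt R d) : R :=
  \sum_(i < d) lam i * t i.

Section MPP.
Context (dsp : measure_display) (T : measurableType dsp) (R : realType)
  (P : probability T R).
Local Open Scope ereal_scope.

Definition indep_nat (m : nat) (X : 'I_m -> T -> nat) : Prop :=
  forall B : 'I_m -> set nat,
    P (\bigcap_(i in [set: 'I_m]) [set w | X i w \in B i]) =
    (\prod_(i < m) fine (P [set w | X i w \in B i]))%R%:E.

Definition multiparam_poisson (d : nat) (lam : pt R d)
    (N : pt R d -> T -> nat) : Prop :=
  (forall t k, nonneg_pt t -> measurable [set w | N t w = k]) /\
  (forall w, N (@pzero R d) w = 0%N) /\
  (forall s t, nonneg_pt s -> nonneg_pt t -> ple s t ->
     forall w, (N s w <= N t w)%N) /\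
  (forall (m : nat) (tt : nat -> pt R d),
     tt 0%N = @pzero R d ->
     (forall i, (i <= m)%N -> nonneg_pt (tt i)) ->
     (forall i, (i < m)%N -> plt (tt i) (tt i.+1)) ->
     indep_nat (fun (i : 'I_m) w => (N (tt i.+1) w - N (tt i) w)%N)) /\
  (forall s t, nonneg_pt s -> nonneg_pt t -> ple s t ->
     forall A : set nat,
       P [set w | (N t w - N s w)%N \in A] =
       P [set w | N (psub t s) w \in A]) /\
  (forall t, nonneg_pt t -> forall A : set nat,
     P [set w | N t w \in A] = poisson_prob (pdot lam t) 0%N A).

Definition cond_exp_event (X : T -> R) (A : set T) : \bar R :=
  (\int[P]_(w in A) (X w)%:E) * ((fine (P A))^-1)%R%:E.

End MPP.

(* Main.v *)
Require Import Defs.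
From HB Require Import structures.
From mathcomp Require Import all_boot all_order all_algebra.
From mathcomp Require Import all_classical all_reals all_analysis.
From mathcomp Require Import ring lra zify.
From mathcomp Require Import measurable_realfun.
Import Order.TTheory GRing.Theory Num.Theory.
Local Open Scope classical_set_scope.
Local Open Scope ring_scope.
Set Implicit Arguments. Unset Strict Implicit. Unset Printing Implicit Defensive.
Section Alg.
Variable R : realFieldType.
Definition pp (x : R) (n : nat) : R := x ^+ n / n`!%:R.

Lemma fact_neq0 n : (n`!%:R : R) != 0.
Proof. by rewrite pnatr_eq0 -lt0n fact_gt0. Qed.

Lemma conv0 (a b : R) n :
  \sum_(i < n.+1) pp a i * pp b (n - i) = pp (a + b) n.
Proof.
rewrite /pp addrC exprDn mulr_suml; apply: eq_bigr => -[i /=]; rewrite ltnS => lein _.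
have := bin_fact lein => /(congr1 (fun k => k%:R : R)); rewrite !natrM => H.
rewrite -H -mulr_natr.
have h1 := fact_neq0 i; have h2 := fact_neq0 (n - i).
have h3 : ('C(n, i)%:R : R) != 0 by rewrite pnatr_eq0 -lt0n bin_gt0.
field; rewrite h1 h2 h3 //.
Qed.

Lemma ppS (x : R) n : n.+1%:R * pp x n.+1 = x * pp x n.
Proof.
rewrite /pp factS natrM exprS.
have h1 := fact_neq0 n; have h2 : (n.+1%:R : R) != 0 by rewrite pnatr_eq0.
field; by rewrite h1 addrC natr1 pnatr_eq0.
Qed.

Lemma conv1 (a b : R) n :
  \sum_(i < n.+2) i%:R * (pp a i * pp b (n.+1 - i)) = a * pp (a + b) n.
Proof.
rewrite big_ord_recl /= mul0r add0r -conv0 mulr_sumr; apply: eq_bigr => i _.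
by rewrite /bump /= add1n subSS mulrA ppS mulrA.
Qed.

Lemma inner (a b : R) j :
  \sum_(i < j.+1) i%:R * (pp a i * pp b (j - i)) =
  if j is j'.+1 then a * pp (a + b) j' else 0.
Proof.
case: j => [|j]; last exact: conv1.
by rewrite big_ord_recl big_ord0 /= mul0r addr0.
Qed.

Lemma final (a b c : R) m : a + b + c != 0 -> (1 <= m)%N ->
  \sum_(j < m.+1) j%:R * (pp c (m - j) *
     \sum_(i < j.+1) i%:R * (pp a i * pp b (j - i))) =
  pp (a + b + c) m * (m%:R * a / (a + b + c)
    + (m * (m - 1))%N%:R * (a * (a + b)) / (a + b + c) ^+ 2).
Proof.
move=> T0; case: m => // m _.
rewrite big_ord_recl /= mul0r add0r.
under eq_bigr => j _ do rewrite inner /bump /= add1n subSS.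
have E : forall j : 'I_m.+1, (j.+1)%:R * (pp c (m - j) * (a * pp (a + b) j))
   = a * (j%:R * (pp (a+b) j * pp c (m - j)) + pp (a+b) j * pp c (m - j)).
  by move=> j; rewrite -addn1 natrD; ring.
under eq_bigr => j _ do rewrite E.
rewrite -mulr_sumr big_split /= conv0.
case: m E => [|m] E.
  rewrite big_ord_recl big_ord0 /= mul0r addr0 add0r /pp /= expr0 expr1 !mul1r.
  rewrite (_ : 0`! = 1%N)// (_ : 1`! = 1%N)// (_ : (1 * (1 - 1))%N = 0%N)//.
  field; by rewrite T0.
rewrite (conv1 (a+b) c m).
rewrite -[(m.+2 * _)%N]/(m.+2 * m.+1)%N natrM.
have -> : pp (a + b + c) m.+2 = (a + b + c) / m.+2%:R * pp (a + b + c) m.+1.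
  apply: (mulfI (_ : (m.+2%:R : R) != 0)); first by rewrite pnatr_eq0.
  rewrite ppS; field; by rewrite ?nat1r -?[2]/(2%:R) -?natrD pnatr_eq0.
have -> : pp (a + b + c) m.+1 = (a + b + c) / m.+1%:R * pp (a + b + c) m.
  apply: (mulfI (_ : (m.+1%:R : R) != 0)); first by rewrite pnatr_eq0.
  rewrite ppS; field; by rewrite ?nat1r -?[2]/(2%:R) -?natrD pnatr_eq0.
field.
rewrite T0 /=; apply/andP; split; by rewrite ?nat1r -?[2]/(2%:R) -?natrD pnatr_eq0.
Qed.
End Alg.
Lemma poisE (R : realType) (x : R) n : 0 <= x ->
  poisson_prob x 0 [set n] = (pp x n * expR (- x))%:E.
Proof.
move=> x0; rewrite /poisson_prob; case: ifPn => xp.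
  by rewrite esum_set1 ?lee_fin ?poisson_pmf_ge0 // /poisson_pmf xp /pp.
have -> : x = 0 by apply/le_anti; rewrite x0 andbT leNgt.
rewrite diracE /pp oppr0 expR0 mulr1; case: n => [|n].
  by rewrite expr0 mem_set //= divr1.
rewrite expr0n /= mul0r memNset //.
Qed.

Lemma set_in1 (T : Type) (f : T -> nat) n :
  [set w | f w \in [set n]] = [set w | f w = n].
Proof. by apply/seteqP; split => w /=; rewrite in_setE. Qed.

Section Proc.
Context (dsp : measure_display) (T : measurableType dsp) (R : realType)
  (P : probability T R) (d : nat) (lam : pt R d) (N : pt R d -> T -> nat).
Hypothesis lam_gt0 : forall i, 0 < lam i.
Hypothesis Hmeas : forall t k, nonneg_pt t -> measurable [set w | N t w = k].
Hypothesis HN0 : forall w, N (@pzero R d) w = 0%N.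
Hypothesis Hmono : forall s t, nonneg_pt s -> nonneg_pt t -> ple s t ->
     forall w, (N s w <= N t w)%N.
Hypothesis Hind : forall (m : nat) (tt : nat -> pt R d),
     tt 0%N = @pzero R d ->
     (forall i, (i <= m)%N -> nonneg_pt (tt i)) ->
     (forall i, (i < m)%N -> plt (tt i) (tt i.+1)) ->
     indep_nat P (fun (i : 'I_m) w => (N (tt i.+1) w - N (tt i) w)%N).
Hypothesis Hstat : forall s t, nonneg_pt s -> nonneg_pt t -> ple s t ->
     forall A : set nat,
       P [set w | (N t w - N s w)%N \in A] =
       P [set w | N (psub t s) w \in A].
Hypothesis Hpois : forall t, nonneg_pt t -> forall A : set nat,
     P [set w | N t w \in A] = poisson_prob (pdot lam t) 0%N A.

Implicit Types (s t u v : pt R d).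

Definition Q (x : R) n := pp x n * expR (- x).

Lemma pdot_ge0 t : nonneg_pt t -> 0 <= pdot lam t.
Proof.
move=> nt; apply: sumr_ge0 => i _; apply: mulr_ge0; [exact: ltW | exact: nt].
Qed.

Lemma pdot_psub t s : pdot lam (psub t s) = pdot lam t - pdot lam s.
Proof. by rewrite /pdot /psub -sumrB; apply: eq_bigr => i _; rewrite mulrBr. Qed.

Lemma nonneg_psub s t : ple s t -> nonneg_pt (psub t s).
Proof. by move=> h i; rewrite /psub subr_ge0. Qed.

Lemma nonneg_ple t : ple (@pzero R d) t -> nonneg_pt t.
Proof. by []. Qed.

Lemma marg t k : nonneg_pt t -> P [set w | N t w = k] = (Q (pdot lam t) k)%:E.
Proof. by move=> nt; rewrite -set_in1 Hpois // poisE // pdot_ge0. Qed.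

Lemma margD s t k : nonneg_pt s -> nonneg_pt t -> ple s t ->
  P [set w | (N t w - N s w)%N = k] = (Q (pdot lam (psub t s)) k)%:E.
Proof.
move=> ns nt st.
rewrite -(set_in1 (fun w => N t w - N s w)%N) Hstat // set_in1 marg //.
exact: nonneg_psub.
Qed.

Lemma chain2 (u v : pt R d) i k : plt (@pzero R d) u -> plt u v ->
  P ([set w | N u w = i] `&` [set w | (N v w - N u w)%N = k]) =
  (Q (pdot lam u) i * Q (pdot lam (psub v u)) k)%:E.
Proof.
move=> [h0u n0u] [huv nuv].
have nu : @nonneg_pt R d u by [].
have nv : @nonneg_pt R d v by move=> j; apply: le_trans (nu j) (huv j).
pose tt (n : nat) := match n with 0%N => @pzero R d | 1%N => u | _ => v end.
pose Bs (j : 'I_2) : set nat := if val j == 0%N then [set i] else [set k].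
have H : indep_nat P (fun (j : 'I_2) w => (N (tt j.+1) w - N (tt j) w)%N).
  apply: Hind => //.
  - by case=> [|[|[|j]]] //= _; rewrite /nonneg_pt /pzero => x.
  - by case=> [|[|j]] //= _; split.
rewrite (_ : _ `&` _ = \bigcap_(j in [set: 'I_2])
     [set w | (N (tt j.+1) w - N (tt j) w)%N \in Bs j]); last first.
  apply/seteqP; split => w /=.
  - move=> [h1 h2] j _; case: j => [[|[|j]] hj] //=; rewrite /Bs /= in_setE /= ?HN0 ?subn0 //.
  - move=> Hw; split.
    + by have := Hw (@Ordinal 2 0 erefl) I; rewrite /Bs /= in_setE /= HN0 subn0.
    + by have := Hw (@Ordinal 2 1 erefl) I; rewrite /Bs /= in_setE /=.
rewrite H.
have -> : Q (pdot lam u) i = fine (P [set w | N u w = i]) by rewrite marg.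
have -> : Q (pdot lam (psub v u)) k = fine (P [set w | (N v w - N u w)%N = k]).
  by rewrite margD.
congr EFin; rewrite !big_ord_recl big_ord0 mulr1.
congr (fine (P _) * fine (P _)); apply/seteqP; split => w /=;
  rewrite /Bs /= in_setE /= ?HN0 ?subn0 //.
Qed.

Lemma chain3 (u v z : pt R d) i k l : plt (@pzero R d) u -> plt u v -> plt v z ->
  P ([set w | N u w = i] `&` [set w | (N v w - N u w)%N = k]
     `&` [set w | (N z w - N v w)%N = l]) =
  (Q (pdot lam u) i * Q (pdot lam (psub v u)) k * Q (pdot lam (psub z v)) l)%:E.
Proof.
move=> [h0u n0u] [huv nuv] [hvz nvz].
have nu : @nonneg_pt R d u by [].
have nv : @nonneg_pt R d v by move=> j; apply: le_trans (nu j) (huv j).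
have nz : @nonneg_pt R d z by move=> j; apply: le_trans (nv j) (hvz j).
pose tt (n : nat) := match n with 0%N => @pzero R d | 1%N => u | 2%N => v | _ => z end.
pose Bs (j : 'I_3) : set nat :=
  if val j == 0%N then [set i] else if val j == 1%N then [set k] else [set l].
have H : indep_nat P (fun (j : 'I_3) w => (N (tt j.+1) w - N (tt j) w)%N).
  apply: Hind => //.
  - by case=> [|[|[|[|j]]]] //= _; rewrite /nonneg_pt /pzero => x.
  - by case=> [|[|[|j]]] //= _; split.
rewrite (_ : _ `&` _ = \bigcap_(j in [set: 'I_3])
     [set w | (N (tt j.+1) w - N (tt j) w)%N \in Bs j]); last first.
  apply/seteqP; split => w /=.
  - move=> [[h1 h2] h3] j _; case: j => [[|[|[|j]]] hj] //=;
      rewrite /Bs /= in_setE /= ?HN0 ?subn0 //.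
  - move=> Hw; split; first split.
    + by have := Hw (@Ordinal 3 0 erefl) I; rewrite /Bs /= in_setE /= HN0 subn0.
    + by have := Hw (@Ordinal 3 1 erefl) I; rewrite /Bs /= in_setE /=.
    + by have := Hw (@Ordinal 3 2 erefl) I; rewrite /Bs /= in_setE /=.
rewrite H.
have -> : Q (pdot lam u) i = fine (P [set w | N u w = i]) by rewrite marg.
have -> : Q (pdot lam (psub v u)) k = fine (P [set w | (N v w - N u w)%N = k]).
  by rewrite margD.
have -> : Q (pdot lam (psub z v)) l = fine (P [set w | (N z w - N v w)%N = l]).
  by rewrite margD.
congr EFin; rewrite !big_ord_recl big_ord0 mulr1 mulrA.
congr (fine (P _) * fine (P _) * fine (P _)); apply/seteqP; split => w /=;
  rewrite /Bs /= in_setE /= ?HN0 ?subn0 //.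
Qed.

Lemma Q0 n : Q 0 n = (n == 0%N)%:R.
Proof.
rewrite /Q /pp oppr0 expR0 mulr1 expr0n; case: n => [|n] /=; last by rewrite mul0r.
by rewrite divr1.
Qed.

Lemma setD0 u k : [set w | (N u w - N u w)%N = k] = if k == 0%N then setT else set0.
Proof. by case: k => [|k] /=; apply/seteqP; split => w //=; rewrite subnn. Qed.

Lemma joint r s t i k l : plt (@pzero R d) r -> ple r s -> ple s t ->
  P ([set w | N r w = i] `&` [set w | (N s w - N r w)%N = k]
     `&` [set w | (N t w - N s w)%N = l]) =
  (Q (pdot lam r) i * Q (pdot lam (psub s r)) k * Q (pdot lam (psub t s)) l)%:E.
Proof.
move=> h0r hrs hst.
have [esr|nsr] := pselect (s = r); have [ets|nts] := pselect (t = s).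
- subst s t; rewrite !pdot_psub subrr !Q0 !setD0.
  case: k => [|k]; case: l => [|l] /=;
    rewrite ?setIT ?setI0 ?measure0 ?mulr0 ?mul0r ?mulr1 //.
  by rewrite marg //; case: h0r.
- subst s; rewrite pdot_psub subrr Q0 setD0.
  case: k => [|k] /=; rewrite ?setIT ?setI0 ?set0I ?measure0 ?mulr0 ?mul0r ?mulr1 //.
  by rewrite chain2 //; split => // e; apply: nts; rewrite e.
- subst t; rewrite (pdot_psub s s) subrr Q0 setD0.
  case: l => [|l] /=; rewrite ?setIT ?setI0 ?set0I ?measure0 ?mulr0 ?mul0r ?mulr1 //.
  by rewrite chain2 //; split => // e; apply: nsr; rewrite e.
- rewrite chain3 //; split => // e; [apply: nsr | apply: nts]; by rewrite e.
Qed.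

Lemma prob_pt r s t m i j : plt (@pzero R d) r -> ple r s -> ple s t ->
  P (([set w | N r w = i] `&` [set w | N s w = j]) `&` [set w | N t w = m]) =
  (if (i <= j <= m)%N then
     Q (pdot lam r) i * Q (pdot lam (psub s r)) (j - i) * Q (pdot lam (psub t s)) (m - j)
   else 0)%:E.
Proof.
move=> h0r hrs hst.
have nr : @nonneg_pt R d r by case: h0r.
have ns : @nonneg_pt R d s by move=> x; apply: le_trans (nr x) (hrs x).
have nt : @nonneg_pt R d t by move=> x; apply: le_trans (ns x) (hst x).
have m1 := Hmono nr ns hrs; have m2 := Hmono ns nt hst.
case: ifPn => hij.
- rewrite -joint //; congr (P _); apply/seteqP; split => w /=.
  + move=> [[h1 h2] h3]; split; first split => //; lia.
  + move=> [[h1 h2] h3]; have := m1 w; have := m2 w; split; first split; lia.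
- rewrite (_ : _ `&` _ = set0) ?measure0 //; apply/seteqP; split => w //=.
  move=> [[h1 h2] h3]; have := m1 w; have := m2 w; lia.
Qed.

Lemma main_int r s t m : plt (@pzero R d) r -> ple r s -> ple s t ->
  (\int[P]_(w in [set w | N t w = m]) ((N r w * N s w)%N%:R)%:E =
  (\sum_(p : 'I_m.+1 * 'I_m.+1) (p.1 * p.2)%N%:R *
     (if (p.1 <= p.2 <= m)%N then
     Q (pdot lam r) p.1 * Q (pdot lam (psub s r)) (p.2 - p.1)
       * Q (pdot lam (psub t s)) (m - p.2)
     else 0))%:E)%E.
Proof.
move=> h0r hrs hst.
have nr : @nonneg_pt R d r by case: h0r.
have ns : @nonneg_pt R d s by move=> x; apply: le_trans (nr x) (hrs x).
have nt : @nonneg_pt R d t by move=> x; apply: le_trans (ns x) (hst x).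
have m1 := Hmono nr ns hrs; have m2 := Hmono ns nt hst.
pose A (p : 'I_m.+1 * 'I_m.+1) := [set w | N r w = p.1] `&` [set w | N s w = p.2].
have mA : forall p, measurable (A p) by move=> p; apply: measurableI; apply: Hmeas.
have mE : measurable [set w | N t w = m] by apply: Hmeas.
rewrite (eq_integral (fun w => \sum_(p : 'I_m.+1 * 'I_m.+1)
   ((p.1 * p.2)%N%:R * \1_(A p) w)%:E)); last first.
  move=> w; rewrite in_setE /= => Ew.
  rewrite sumEFin; congr EFin.
  have hr : (N r w < m.+1)%N by have := m1 w; have := m2 w; lia.
  have hs : (N s w < m.+1)%N by have := m2 w; lia.
  rewrite (bigD1 (inord (N r w), inord (N s w))) //= big1 ?addr0.
    rewrite indicE mem_set ?mulr1 ?inordK //.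
    by split; rewrite /= inordK.
  move=> [i j] /= neq; rewrite indicE memNset ?mulr0 //.
  move=> [/= h1 h2]; move/negP: neq; apply.
  by rewrite xpair_eqE; apply/andP; split; apply/eqP/val_inj; rewrite /= inordK // ?h1 ?h2.
rewrite ge0_integral_sum //; last first.
  move=> p; apply/measurable_EFinP; apply: measurable_funM.
    exact: measurable_cst.
  exact: measurable_indic.
rewrite -sumEFin; apply: eq_bigr => p _.
under eq_integral do rewrite EFinM.
rewrite ge0_integralZl //; last first.
  by apply/measurable_EFinP; exact: measurable_indic.
rewrite integral_indic // /A.
by rewrite EFinM -(prob_pt m p.1 p.2 h0r hrs hst).
Qed.

Lemma main_sec r s t m : plt (@pzero R d) r -> ple r s -> ple s t -> (1 <= m)%N ->
    cond_exp_event P (fun w => ((N r w * N s w)%N)%:R) [set w | N t w = m] =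
    (m%:R * pdot lam r / pdot lam t
     + (m * (m - 1))%N%:R * (pdot lam r * pdot lam s) / (pdot lam t) ^+ 2)%:E.
Proof.
move=> h0r hrs hst m1.
have nr : @nonneg_pt R d r by case: h0r.
have ns : @nonneg_pt R d s by move=> x; apply: le_trans (nr x) (hrs x).
have nt : @nonneg_pt R d t by move=> x; apply: le_trans (ns x) (hst x).
rewrite /cond_exp_event main_int // marg // /= -EFinM; congr EFin.
rewrite !pdot_psub.
set a := pdot lam r; set sa := pdot lam s; set ta := pdot lam t.
have a0 : 0 < a.
  rewrite lt0r pdot_ge0 // andbT; apply/eqP => a0; apply: h0r.2.
  apply/funext => x.
  have := @psumr_eq0P R 'I_d xpredT (fun i => lam i * r i)
    (fun i _ => mulr_ge0 (ltW (lam_gt0 i)) (nr i)) a0 x isT.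
  by move/eqP; rewrite mulf_eq0 (gt_eqF (lam_gt0 x)) /= => /eqP ->.
have ata : a <= ta.
  apply: ler_sum => i _; apply: ler_wpM2l; first exact: ltW.
  exact: le_trans (hrs i) (hst i).
have ta0 : ta != 0 by rewrite gt_eqF // (lt_le_trans a0 ata).
rewrite -(pair_bigA _ (fun (i j : 'I_m.+1) => (i * j)%N%:R *
  (if (i <= j <= m)%N then Q a i * Q (sa - a) (j - i) * Q (ta - sa) (m - j) else 0))) /=.
rewrite exchange_big /=.
have key : forall j : 'I_m.+1, \sum_(i < m.+1) (i * j)%N%:R *
   (if (i <= j <= m)%N then Q a i * Q (sa - a) (j - i) * Q (ta - sa) (m - j) else 0)
   = expR (- ta) * (j%:R * (pp (ta - sa) (m - j) *
       \sum_(i < j.+1) i%:R * (pp a i * pp (sa - a) (j - i)))).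
  move=> j.
  rewrite (big_ord_widen m.+1 (fun i => i%:R * (pp a i * pp (sa - a) (j - i))))
    ?ltn_ord // !mulr_sumr [RHS]big_mkcond; apply: eq_bigr => i _.
  rewrite (leq_ord j) andbT ltnS; case: (i <= j)%N; last by rewrite mulr0.
  have -> : expR (- ta) = expR (- a) * expR (- (sa - a)) * expR (- (ta - sa)).
    by rewrite -!expRD; congr expR; ring.
  rewrite /Q natrM; ring.
rewrite (eq_bigr _ (fun j _ => key j)) -mulr_sumr.
have e1 : a + (sa - a) = sa by ring.
have e2 : sa + (ta - sa) = ta by ring.
have F := @final R a (sa - a) (ta - sa) m.
rewrite e1 e2 in F; rewrite F //.
have pp0 : pp ta m != 0 by rewrite /pp mulf_neq0 ?invr_eq0 ?fact_neq0 ?expf_neq0.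
have ex0 : expR (- ta) != 0 by rewrite gt_eqF // expR_gt0.
clearbody a sa ta; rewrite /Q; field; by rewrite pp0 ex0 ta0.
Qed.

End Proc.

Theorem mainTheorem3 (dsp : measure_display) (T : measurableType dsp)
  (R : realType) (P : probability T R) (d : nat) (lam : pt R d)
  (N : pt R d -> T -> nat) :
  (forall i, 0 < lam i) ->
  multiparam_poisson P lam N ->
  forall (r s t : pt R d) (m : nat),
    plt (@pzero R d) r -> ple r s -> ple s t -> (1 <= m)%N ->
    cond_exp_event P (fun w => ((N r w * N s w)%N)%:R) [set w | N t w = m] =
    (m%:R * pdot lam r / pdot lam t
     + (m * (m - 1))%N%:R * (pdot lam r * pdot lam s) / (pdot lam t) ^+ 2)%:E.
Proof.
move=> lam0 [Hmeas [HN0 [Hmono [Hind [Hstat Hpois]]]]] r s t m h0r hrs hst m1.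
by apply: main_sec.
Qed.
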